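(* Let $\mathcal{G}$ be a locally finite one-ended Borel graph on a standard Borel space $X$, and let $\mathcal{F}\subseteq\mathcal{R}_{\mathcal{G}}$ be a finite Borel equivalence relation each of whose classes induces a connected subgraph of $\mathcal{G}$. Let $Q\subseteq\mathcal{F}$ be a Borel set (of pairs, regarded as edges) such that every $\mathcal{F}$-class still induces a connected subgraph of $\mathcal{G}\setminus Q$. Then $\mathcal{G}\setminus Q$ is one-ended.
   Context: A Borel graph is a symmetric Borel set $\mathcal G\subseteq X^2$; it is one-ended if every connected component is one-ended, i.e. removing any finite set of vertices from it leaves exactly one infinite connected component. $\mathcal R_{\mathcal G}$ is the connectedness relation of $\mathcal G$. A finite Borel equivalence relation is a Borel equivalence relation with finite classes. *)

(* Defs.v *)
From HB Require Import structures.
From mathcomp Require Import all_boot all_order all_algebra.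
From mathcomp Require Import all_classical all_reals all_analysis.
From mathcomp Require Import Rstruct Rstruct_topology.
Set Implicit Arguments. Unset Strict Implicit. Unset Printing Implicit Defensive.
Import Order.TTheory GRing.Theory Num.Theory.
Local Open Scope classical_set_scope.

(* Standard Borel space: a measurable space that is Borel-isomorphic to a
   Borel subset of the real line (Kuratowski's theorem: this is equivalent
   to being the Borel space of a Polish topology). *)
Definition standard_borel {d} (X : measurableType d) : Prop :=
  exists f : X -> measurableTypeR Rdefinitions.R,
    injective f /\ measurable_fun setT f /\
    (forall A : set X, measurable A -> measurable (f @` A)).

Definition borel_graph {d} (X : measurableType d) (G : set (X * X)) : Prop :=
  measurable G /\ (forall x y, G (x, y) -> G (y, x)).

Definition locally_finite {T} (G : set (T * T)) : Prop :=
  forall x, finite_set [set y | G (x, y)].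

(* conn_in G A x y : x and y are joined by a G-path all of whose vertices lie
   in A (i.e. x, y are in the same component of the subgraph induced on A). *)
Inductive conn_in {T} (G : set (T * T)) (A : set T) (x : T) : T -> Prop :=
| conn_refl : A x -> conn_in G A x x
| conn_step : forall y z, conn_in G A x y -> G (y, z) -> A z -> conn_in G A x z.

Definition RG {T} (G : set (T * T)) (x y : T) : Prop := conn_in G setT x y.

Definition component {T} (G : set (T * T)) (x : T) : set T := [set y | RG G x y].

Definition one_ended_component {T} (G : set (T * T)) (C : set T) : Prop :=
  forall S : set T, finite_set S ->
    exists y, (C `\` S) y /\ infinite_set [set z | conn_in G (C `\` S) y z] /\
      forall y', (C `\` S) y' -> infinite_set [set z | conn_in G (C `\` S) y' z] ->
        conn_in G (C `\` S) y y'.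

Definition one_ended {T} (G : set (T * T)) : Prop :=
  forall x, one_ended_component G (component G x).

Definition finite_borel_equiv {d} (X : measurableType d) (F : set (X * X)) : Prop :=
  measurable F /\
  (forall x, F (x, x)) /\
  (forall x y, F (x, y) -> F (y, x)) /\
  (forall x y z, F (x, y) -> F (y, z) -> F (x, z)) /\
  (forall x, finite_set [set y | F (x, y)]).

Definition classes_connected {T} (G F : set (T * T)) : Prop :=
  forall x y, F (x, y) -> conn_in G [set z | F (x, z)] x y.

(* G \ Q where the pairs of Q are regarded as (undirected) edges: an edge
   {x,y} is removed if (x,y) or (y,x) lies in Q. *)
Definition remove_edges {T} (G Q : set (T * T)) : set (T * T) :=
  [set p | G p /\ ~ Q p /\ ~ Q (p.2, p.1)].

(* Main.v *)
Require Import Defs.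
From HB Require Import structures.
From mathcomp Require Import all_boot all_order all_algebra.
From mathcomp Require Import all_classical all_reals all_analysis.
Local Open Scope classical_set_scope.

Section Aux.
Context {T : Type}.

Lemma conn_ends {G : set (T * T)} {A x y} : conn_in G A x y -> A x /\ A y.
Proof. by elim=> [Ax|y0 z _ [Ax _] _ Az]. Qed.

Lemma conn_mono {G1 G2 : set (T * T)} {A B x y} :
  G1 `<=` G2 -> A `<=` B -> conn_in G1 A x y -> conn_in G2 B x y.
Proof.
move=> GG AB; elim=> [Ax|y0 z _ IH e Az]; first by apply: conn_refl; apply: AB.
by apply: (conn_step IH); [apply: GG|apply: AB].
Qed.

Lemma conn_trans {G : set (T * T)} {A x y z} :
  conn_in G A x y -> conn_in G A y z -> conn_in G A x z.
Proof.
move=> Hxy; elim=> [//|y0 z0 _ IH e Az]; exact: (conn_step IH e Az).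
Qed.

Lemma conn_sym {G : set (T * T)} {A x y} :
  (forall u v, G (u, v) -> G (v, u)) -> conn_in G A x y -> conn_in G A y x.
Proof.
move=> Gs; elim=> [Ax|y0 z H IH e Az]; first exact: conn_refl.
apply: (conn_trans _ IH).
have [_ Ay0] := conn_ends H.
exact: (conn_step (conn_refl G Az) (Gs _ _ e) Ay0).
Qed.

End Aux.

Theorem proposition3p9 (d : measure_display) (X : measurableType d)
  (G F Q : set (X * X)) :
  standard_borel X ->
  borel_graph G -> locally_finite G -> one_ended G ->
  finite_borel_equiv F -> (forall x y, F (x, y) -> RG G x y) ->
  classes_connected G F ->
  measurable Q -> Q `<=` F ->
  classes_connected (remove_edges G Q) F ->
  one_ended (remove_edges G Q).
Proof.
move=> _ [_ Gs] lfG oneG [_ [Frefl [Fsym [Ftr Ffin]]]] FRG _ _ QF ccG'.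
set G' := remove_edges G Q.
have G'G : G' `<=` G by move=> p [].
have G's : forall u v, G' (u, v) -> G' (v, u).
  by move=> u v [e [n1 n2]]; split; [apply: Gs|split].
have lift : forall u v, G (u, v) -> ~ G' (u, v) ->
    F (u, v) /\ conn_in G' [set z | F (u, z)] u v.
  move=> u v e nG'.
  have Fuv : F (u, v).
    case: (pselect (Q (u, v))) => [/QF //|nq1].
    case: (pselect (Q (v, u))) => [/QF/Fsym //|nq2].
    by exfalso; apply: nG'; split; [|split].
  by split => //; apply: ccG'.
have conv : forall (D E : set X) a b,
    D `<=` E -> (forall u z, D u -> F (u, z) -> E z) ->
    conn_in G D a b -> conn_in G' E a b.
  move=> D E a b DE DF; elim=> [Da|w z H IH e Dz].
    by apply: conn_refl; apply: DE.
  have [_ Dw] := conn_ends H.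
  case: (pselect (G' (w, z))) => [e'|ne'].
    by apply: (conn_step IH e'); apply: DE.
  have [Fwz Hc] := lift _ _ e ne'.
  apply: (conn_trans IH); apply: conn_mono Hc => //.
  by move=> t Ft; apply: DF Ft.
have RGtr : forall a b c, RG G a b -> RG G b c -> RG G a c.
  by move=> a b c; apply: conn_trans.
have RGsym : forall a b, RG G a b -> RG G b a.
  by move=> a b; apply: conn_sym.
move=> x.
have -> : component G' x = component G x.
  apply/funext=> z; apply/propext; split.
    by apply: conn_mono.
  rewrite /component /RG /=.
  move=> H; apply: (conv setT setT) H => //.
set C := component G x.
move=> S finS.
set S' := [set w | exists s, S s /\ F (s, w)].
have finS' : finite_set S'.
  apply: (sub_finite_set (B := \bigcup_(s in S) [set w | F (s, w)])).
    by move=> w [s [Ss Fsw]]; exists s.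
  by apply: bigcup_finite => // s _; apply: Ffin.
have SS' : S `<=` S' by move=> s Ss; exists s; split => //; apply: Frefl.
have CDF : forall u z, (C `\` S') u -> F (u, z) -> (C `\` S) z.
  move=> u z [Cu nS'u] Fuz; split.
    by apply: RGtr Cu (FRG _ _ Fuz).
  move=> Sz; apply: nS'u; exists z; split => //; exact: Fsym.
have CDsub : (C `\` S') `<=` (C `\` S) by move=> u [Cu nu]; split => // /SS'.
have convC : forall a b, conn_in G (C `\` S') a b -> conn_in G' (C `\` S) a b.
  by move=> a b; apply: conv.
have [y [CDy [infK U]]] := oneG x S' finS'.
set K := [set z | conn_in G (C `\` S') y z].
set N := [set n | ((C `\` S') n /\ ~ K n) /\ exists s, S' s /\ G (n, s)].
have finN : finite_set N.
  apply: (sub_finite_set (B := \bigcup_(s in S') [set w | G (s, w)])).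
    by move=> n [_ [s [S's e]]]; exists s => //; apply: Gs.
  by apply: bigcup_finite => // s _; apply: lfG.
set B := [set b | (C `\` S') b /\ ~ K b].
have finB : finite_set B.
  apply: (sub_finite_set (B := \bigcup_(n in N) [set z | conn_in G (C `\` S') n z])).
    move=> b [CDb nKb].
    have Cb := CDb.1.
    have Hby : conn_in G setT b y by apply: RGtr (RGsym _ _ Cb) CDy.1.
    have gen : forall w, conn_in G setT b w ->
        conn_in G (C `\` S') b w \/
        exists n, ((C `\` S') n /\ exists s, S' s /\ G (n, s)) /\
          conn_in G (C `\` S') b n.
      move=> w; elim=> [_|w0 z _ IH e _]; first by left; apply: conn_refl.
      case: IH => [H|H]; last by right.
      have [_ CDw0] := conn_ends H.
      case: (pselect (S' z)) => [S'z|nS'z].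
        by right; exists w0; split => //; split => //; exists z.
      left; apply: (conn_step H e); split => //.
      apply: RGtr CDw0.1 _.
      exact: (conn_step (conn_refl _ I) e I).
    case: (gen _ Hby) => [H|[n [[CDn Sn] Hbn]]].
      by exfalso; apply: nKb; apply: conn_sym H.
    exists n; last by apply: conn_sym Hbn.
    split => //; split => // Kn; apply: nKb; exact: conn_trans Kn (conn_sym Gs Hbn).
  apply: bigcup_finite => // n [[CDn nKn] _].
  apply: contrapT => infn; apply: nKn; exact: U.
exists y; split; first by apply: CDsub.
split.
  apply: sub_infinite_set infK => z Kz; exact: convC.
move=> y' CDy' infW.
have finSB : finite_set (S' `|` B) by rewrite finite_setU.
have [z [Wz nz]] := infinite_setN0 (infinite_setD infW finSB).
have [_ [Cz nSz]] := conn_ends Wz.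
have Kz : K z.
  apply: contrapT => nKz; apply: (nz); right; split => //; split => // S'z.
  by apply: (nz); left.
apply: conn_trans (convC _ _ Kz) _.
exact: conn_sym G's Wz.
Qed.
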